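(* Let $A$ be a commutative unital $\mathbb{K}$-algebra. Then $(T^+(A),\bar\bullet^\ell,P_A)$, together with the unital algebra morphism $i_A:A\to T^+(A)$, $i_A(a)=a\otimes1_{\mathbb{K}}$, is the free unital commutative $TD$-algebra over $A$: for every unital commutative $TD$-algebra $(B,P)$ and every unital algebra morphism $\phi:A\to B$ there exists a unique $TD$-algebra morphism $\tilde\phi:T^+(A)\to B$ with $\tilde\phi\circ i_A=\phi$. (It is given by $\tilde\phi(a_1\otimes a_2\otimes\cdots\otimes a_n)=\phi(a_1)\,P\bigl(\tilde\phi(a_2\otimes\cdots\otimes a_n)\bigr)$.)
   Context: $\mathbb{K}$ is a field of characteristic $0$, $A$ has product $[a;b]$ and unit $1_A$. $T(A)=\bigoplus_{n\ge0}A^{\otimes n}$ with $A^{\otimes0}=\mathbb{K}1_{\mathbb{K}}$; $a\otimes1_{\mathbb{K}}$ is identified with $a$. The left-shift shuffle $\bullet^\ell$ is the bilinear product on $T(A)$ with $k1_{\mathbb{K}}\bullet^\ell U=kU=U\bullet^\ell k1_{\mathbb{K}}$ and, for $a,b\in A$, $U,V\in T(A)$, $(a\otimes U)\bullet^\ell(b\otimes V)=a\otimes\bigl(U\bullet^\ell(b\otimes V)\bigr)+b\otimes\bigl((a\otimes U)\bullet^\ell V\bigr)-[a;b]\otimes1_A\otimes(U\bullet^\ell V)$. $T^+(A):=A\otimes T(A)=\bigoplus_{n\ge1}A^{\otimes n}$ with product $(a\otimes U)\,\bar\bullet^\ell\,(b\otimes V):=[a;b]\otimes(U\bullet^\ell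 V)$ and unit $1_A\otimes1_{\mathbb{K}}$. $P_A:T^+(A)\to T^+(A)$ is the linear map $P_A(a_1\otimes\cdots\otimes a_n)=1_A\otimes a_1\otimes\cdots\otimes a_n$. A $TD$-algebra is a pair $(B,P)$, $B$ a unital associative algebra, $P:B\to B$ linear with $P(x)P(y)=P\bigl(P(x)y+xP(y)\bigr)-P\bigl(x\,P(1_B)\,y\bigr)$ for all $x,y$. A $TD$-algebra morphism $(B_1,P_1)\to(B_2,P_2)$ is a unital algebra homomorphism $f$ with $fP_1=P_2f$. *)

(* Defs.v *)
From HB Require Import structures.
From mathcomp Require Import all_boot all_order all_algebra.
From mathcomp Require Import finmap.
From mathcomp.multinomials Require Import monalg.
Set Implicit Arguments. Unset Strict Implicit. Unset Printing Implicit Defensive.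
Import GRing.Theory.
Local Open Scope ring_scope.

(* T(A)   is modelled as the free K-module on words (seq A) modulo the
          multilinearity relations; the word [:: a1; ..; an] stands for
          a1 (x) ... (x) an and [::] for 1_K.
   T^+(A) = A (x) T(A) is modelled as the free K-module on pairs
          (a, w) : A * seq A (standing for a (x) w), modulo the same
          relations (transported along (a,w) |-> a :: w). *)

Section TensorModel.
Variables (K : fieldType) (A : comAlgType K).

Definition Tfree := {malg K[seq A]}.
Definition Tplus := {malg K[(A * seq A)%type]}.

Definition lin_ext (W : choiceType) (V : lmodType K) (h : W -> V)
  (x : {malg K[W]}) : V := \sum_(w <- msupp x) x@_w *: h w.

Definition bilin_ext (W1 W2 : choiceType) (V : lmodType K) (h : W1 -> W2 -> V)
  (x : {malg K[W1]}) (y : {malg K[W2]}) : V :=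
  \sum_(u <- msupp x) \sum_(v <- msupp y) (x@_u * y@_v) *: h u v.

Definition consm (a : A) : Tfree -> Tfree :=
  lin_ext (fun w : seq A => (<< a :: w >> : Tfree)).

Fixpoint sh (u : seq A) : seq A -> Tfree :=
  match u with
  | [::] => fun v => << v >>
  | a :: u' =>
      fix shv (v : seq A) : Tfree :=
        match v with
        | [::] => << a :: u' >>
        | b :: v' => consm a (sh u' v) + consm b (shv v')
                     - consm (a * b) (consm 1 (sh u' v'))
        end
  end.

Definition shuffle : Tfree -> Tfree -> Tfree := bilin_ext sh.

Definition tplus_of (c : A) : Tfree -> Tplus :=
  lin_ext (fun w : seq A => (<< (c, w) >> : Tplus)).

Definition tmul : Tplus -> Tplus -> Tplus :=
  bilin_ext (fun p q : A * seq A => tplus_of (p.1 * q.1) (sh p.2 q.2)).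

Definition tone : Tplus := << (1, [::]) >>.

Definition PA : Tplus -> Tplus :=
  lin_ext (fun p : A * seq A => (<< (1, p.1 :: p.2) >> : Tplus)).

Definition iA (a : A) : Tplus := << (a, [::]) >>.

Inductive in_N : Tfree -> Prop :=
  | N_add (w1 w2 : seq A) (x y : A) :
      in_N (<< w1 ++ (x + y) :: w2 >> - << w1 ++ x :: w2 >> - << w1 ++ y :: w2 >>)
  | N_scale (w1 w2 : seq A) (k : K) (x : A) :
      in_N (<< w1 ++ (k *: x) :: w2 >> - k *: << w1 ++ x :: w2 >>)
  | N_zero : in_N 0
  | N_plus x y : in_N x -> in_N y -> in_N (x + y)
  | N_scal k x : in_N x -> in_N (k *: x).

Definition emb : Tplus -> Tfree :=
  lin_ext (fun p : A * seq A => (<< p.1 :: p.2 >> : Tfree)).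

Definition tequiv (x y : Tplus) : Prop := in_N (emb (x - y)).

Definition TD_identity (B : comAlgType K) (P : B -> B) : Prop :=
  forall x y : B, P x * P y = P (P x * y + x * P y) - P (x * P 1 * y).

Definition TD_morphism (B : comAlgType K) (P : B -> B) (f : Tplus -> B) : Prop :=
  [/\ forall x y, tequiv x y -> f x = f y,
      forall (k : K) x y, f (k *: x + y) = k *: f x + f y,
      forall x y, f (tmul x y) = f x * f y,
      f tone = 1
    & forall x, f (PA x) = P (f x)].

End TensorModel.

(* Main.v *)
Require Import Defs.
From HB Require Import structures.
From mathcomp Require Import all_boot all_order all_algebra.
From mathcomp Require Import finmap.
From mathcomp.multinomials Require Import monalg.
Import GRing.Theory.
Local Open Scope ring_scope.

From mathcomp Require Import ssrAC zify ring.
Set Implicit Arguments. Unset Strict Implicit. Unset Printing Implicit Defensive.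

Section Lin.
Variable K : fieldType.

Definition islin (U V : lmodType K) (F : U -> V) :=
  forall (k : K) x y, F (k *: x + y) = k *: F x + F y.

Section IsLin.
Variables (U V : lmodType K) (F : U -> V) (hF : islin F).
Lemma islin0 : F 0 = 0.
Proof.
have := hF 1 0 0; rewrite scale1r scale1r addr0 => e.
by apply/(addrI (F 0)); rewrite addr0 -e.
Qed.
Lemma islinD x y : F (x + y) = F x + F y.
Proof. by have := hF 1 x y; rewrite !scale1r. Qed.
Lemma islinZ k x : F (k *: x) = k *: F x.
Proof. by have := hF k x 0; rewrite !addr0 islin0 addr0. Qed.
Lemma islinN x : F (- x) = - F x.
Proof. by rewrite -scaleN1r islinZ scaleN1r. Qed.
Lemma islinB x y : F (x - y) = F x - F y.
Proof. by rewrite islinD islinN. Qed.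
Lemma islin_sum (I : Type) (r : seq I) (G : I -> U) :
  F (\sum_(i <- r) G i) = \sum_(i <- r) F (G i).
Proof.
elim: r => [|i r IH]; first by rewrite !big_nil islin0.
by rewrite !big_cons islinD IH.
Qed.
End IsLin.

Lemma islin_comp (U V W : lmodType K) (F : V -> W) (G : U -> V) :
  islin F -> islin G -> islin (fun x => F (G x)).
Proof. by move=> hF hG k x y; rewrite hG hF. Qed.
Lemma islin_add (U V : lmodType K) (F G : U -> V) :
  islin F -> islin G -> islin (fun x => F x + G x).
Proof.
move=> hF hG k x y; rewrite hF hG scalerDr.
by rewrite -!addrA; congr (_ + _); rewrite addrCA.
Qed.
Lemma islin_opp (U V : lmodType K) (F : U -> V) :
  islin F -> islin (fun x => - F x).
Proof. by move=> hF k x y; rewrite hF opprD scalerN. Qed.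
Lemma islin_sub (U V : lmodType K) (F G : U -> V) :
  islin F -> islin G -> islin (fun x => F x - G x).
Proof. by move=> hF hG; apply: islin_add => //; apply: islin_opp. Qed.
Lemma islin_id (U : lmodType K) : islin (fun x : U => x).
Proof. by []. Qed.
Lemma islin_linear (U V : lmodType K) (F : {linear U -> V}) : islin F.
Proof. by move=> k x y; rewrite linearP. Qed.

Section LinExt.
Variables (W : choiceType) (V : lmodType K).
Implicit Types (h : W -> V) (x y : {malg K[W]}).

Lemma lin_extEw h x (d : {fset W}) : (msupp x `<=` d)%fset ->
  lin_ext h x = \sum_(w <- d) x@_w *: h w.
Proof.
move=> le; rewrite /lin_ext (big_fset_incl _ le) //= => w _ /mcoeff_outdom ->.
by rewrite scale0r.
Qed.

Lemma islin_lin_ext h : islin (lin_ext h).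
Proof.
move=> k x y; set d := (msupp x `|` msupp y)%fset.
have hx : (msupp x `<=` d)%fset by apply: fsubsetUl.
have hy : (msupp y `<=` d)%fset by apply: fsubsetUr.
have hxy : (msupp (k *: x + y) `<=` d)%fset.
  apply: fsubset_trans (msuppD_le _ _) _; apply: fsetUSS => //.
  exact: fsubset_trans (msuppZ_le _ _) _.
rewrite !(lin_extEw h hx, lin_extEw h hy, lin_extEw h hxy).
rewrite scaler_sumr -big_split /=; apply: eq_bigr => w _.
by rewrite mcoeffD mcoeffZ scalerDl scalerA.
Qed.

Lemma lin_extU h w : lin_ext h << w >> = h w.
Proof. by rewrite (lin_extEw h msuppU_le) big_seq_fset1 mcoeffUU scale1r. Qed.

Lemma malgUZ (c : K) (w : W) : << c *g w >> = c *: (<< w >> : {malg K[W]}).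
Proof.
apply/malgP => w'; rewrite mcoeffZ !mcoeffU.
by case: (w == w'); rewrite ?mulr1 ?mulr0.
Qed.

Lemma malg_decomp x : x = \sum_(w <- msupp x) x@_w *: << w >>.
Proof. by rewrite {1}(monalgE x); apply: eq_bigr => w _; rewrite malgUZ. Qed.

Lemma lin_ext_uniq (F : {malg K[W]} -> V) : islin F ->
  forall x, F x = lin_ext (fun w => F << w >>) x.
Proof.
move=> hF x; rewrite {1}(malg_decomp x) islin_sum //.
by apply: eq_bigr => w _; rewrite islinZ.
Qed.

Lemma ext_basis (F G : {malg K[W]} -> V) : islin F -> islin G ->
  (forall w, F << w >> = G << w >>) -> forall x, F x = G x.
Proof.
move=> hF hG e x; rewrite (lin_ext_uniq hF) (lin_ext_uniq hG).
by rewrite /lin_ext; apply: eq_bigr => w _; rewrite e.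
Qed.

Lemma lin_ext_comb (k : K) (g1 g2 : W -> V) x :
  lin_ext (fun w => k *: g1 w + g2 w) x = k *: lin_ext g1 x + lin_ext g2 x.
Proof.
rewrite /lin_ext scaler_sumr -big_split /=; apply: eq_bigr => w _.
by rewrite scalerDr !scalerA mulrC.
Qed.

Lemma lin_ext_eq (g1 g2 : W -> V) : g1 =1 g2 -> lin_ext g1 =1 lin_ext g2.
Proof. by move=> e x; rewrite /lin_ext; apply: eq_bigr => w _; rewrite e. Qed.
End LinExt.

Section BilinExt.
Variables (W1 W2 : choiceType) (V : lmodType K) (h : W1 -> W2 -> V).

Lemma bilin_extE x y : bilin_ext h x y = lin_ext (fun u => lin_ext (h u) y) x.
Proof.
rewrite /bilin_ext /lin_ext; apply: eq_bigr => u _.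
by rewrite scaler_sumr; apply: eq_bigr => v _; rewrite scalerA.
Qed.

Lemma islin_bilin_l y : islin (fun x => bilin_ext h x y).
Proof. by move=> k x x'; rewrite !bilin_extE islin_lin_ext. Qed.

Lemma islin_bilin_r x : islin (fun y => bilin_ext h x y).
Proof.
move=> k y y'; rewrite !bilin_extE -lin_ext_comb; apply: lin_ext_eq => u.
by rewrite islin_lin_ext.
Qed.

Lemma bilin_extU u v : bilin_ext h << u >> << v >> = h u v.
Proof. by rewrite bilin_extE !lin_extU. Qed.

Lemma bilin_extUl u y : bilin_ext h << u >> y = lin_ext (h u) y.
Proof. by rewrite bilin_extE lin_extU. Qed.
Lemma bilin_extUr x v : bilin_ext h x << v >> = lin_ext (fun u => h u v) x.
Proof. by rewrite bilin_extE; apply: lin_ext_eq => u; rewrite lin_extU. Qed.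
End BilinExt.
End Lin.

Section Words.
Variables (K : fieldType) (A : comAlgType K).
Local Notation T := (Tfree A).

Lemma islin_consm (a : A) : islin (consm a).
Proof. exact: islin_lin_ext. Qed.
Lemma consmU (a : A) w : consm a << w >> = << a :: w >> :> T.
Proof. exact: lin_extU. Qed.
Lemma islin_shl (y : T) : islin (fun x => shuffle x y).
Proof. exact: islin_bilin_l. Qed.
Lemma islin_shr (x : T) : islin (fun y => shuffle x y).
Proof. exact: islin_bilin_r. Qed.
Lemma shuffleU (u v : seq A) : shuffle << u >> << v >> = sh u v.
Proof. exact: bilin_extU. Qed.
Lemma islin_const0 (U V : lmodType K) : islin (fun _ : U => (0 : V)).
Proof. by move=> k x y; rewrite scaler0 addr0. Qed.

Lemma sh_nil_l (v : seq A) : sh [::] v = << v >>. Proof. by []. Qed.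
Lemma sh_nil_r (u : seq A) : sh u [::] = << u >>. Proof. by case: u. Qed.
Lemma sh_cons (a b : A) u v : sh (a :: u) (b :: v) =
  consm a (sh u (b::v)) + consm b (sh (a::u) v) - consm (a*b) (consm 1 (sh u v)).
Proof. by []. Qed.

End Words.

Ltac lin :=
  repeat match goal with
  | |- islin (fun _ => _ + _) => apply: islin_add
  | |- islin (fun _ => _ - _) => apply: islin_sub
  | |- islin (fun _ => - _) => apply: islin_opp
  | |- islin (fun x => x) => apply: islin_id
  | |- islin (fun _ => 0) => apply: islin_const0
  | |- islin (fun x => consm ?a (@?G x)) =>
      apply: (islin_comp (F := consm a) (G := G) (islin_consm a))
  | |- islin (fun x => shuffle (@?G x) ?y) =>
      apply: (islin_comp (F := fun z => shuffle z y) (G := G) (islin_shl y))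
  | |- islin (fun x => shuffle ?y (@?G x)) =>
      apply: (islin_comp (F := fun z => shuffle y z) (G := G) (islin_shr y))
  | |- islin _ => first [exact: islin_consm | exact: islin_shl | exact: islin_shr
                        | exact: islin_lin_ext | exact: islin_id ]
  end.

Section Words2.
Variables (K : fieldType) (A : comAlgType K).
Local Notation T := (Tfree A).

Lemma sh_comm (u v : seq A) : sh u v = sh v u.
Proof.
elim: u v => [|a u IHu] v; first by rewrite sh_nil_r.
elim: v => [|b v IHv]; first by rewrite sh_nil_r.
by rewrite !sh_cons IHv IHu (IHu v) (addrC (consm a _)) mulrC.
Qed.


Ltac ext := lazymatch goal with |- forall x, @eq ?V _ _ => apply: (@ext_basis _ _ V) end.

Lemma shuffleC (x y : T) : shuffle x y = shuffle y x.
Proof.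
move: x; ext; lin => u.
move: y; ext; lin => v.
by rewrite !shuffleU sh_comm.
Qed.

Lemma shuffle_nil_r (x : T) : shuffle x << [::] >> = x.
Proof. by move: x; ext; lin => u; rewrite shuffleU sh_nil_r. Qed.
Lemma shuffle_nil_l (x : T) : shuffle << [::] >> x = x.
Proof. by rewrite shuffleC shuffle_nil_r. Qed.

Lemma shuffle_cons (a b : A) (S U : T) : shuffle (consm a S) (consm b U) =
  consm a (shuffle S (consm b U)) + consm b (shuffle (consm a S) U)
  - consm (a*b) (consm 1 (shuffle S U)).
Proof.
move: S; ext; lin => u.
move: U; ext; lin => v.
by rewrite !consmU !shuffleU sh_cons.
Qed.

Lemma sh1l (u v : seq A) : sh (1 :: u) v = consm 1 (sh u v).
Proof.
elim: v => [|b v IH]; first by rewrite !sh_nil_r consmU.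
by rewrite sh_cons IH mul1r addrK.
Qed.

Lemma shuffle1l (S U : T) : shuffle (consm 1 S) U = consm 1 (shuffle S U).
Proof.
move: S; ext; lin => u.
move: U; ext; lin => v.
by rewrite consmU !shuffleU sh1l.
Qed.

Lemma sh_one (u : seq A) : sh u [:: 1] = << 1 :: u >>.
Proof.
elim: u => [|a u IH] //.
by rewrite sh_cons IH !sh_nil_r !consmU mulr1 addrAC subrr add0r.
Qed.
End Words2.

Section Words3.
Variables (K : fieldType) (A : comAlgType K).
Local Notation T := (Tfree A).
Lemma consmD (a : A) (x y : T) : consm a (x + y) = consm a x + consm a y.
Proof. exact: islinD (islin_consm a) x y. Qed.
Lemma consmB (a : A) (x y : T) : consm a (x - y) = consm a x - consm a y.
Proof. exact: islinB (islin_consm a) x y. Qed.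
Lemma consmN (a : A) (x : T) : consm a (- x) = - consm a x.
Proof. exact: islinN (islin_consm a) x. Qed.
Lemma consmZ (a : A) k (x : T) : consm a (k *: x) = k *: consm a x.
Proof. exact: islinZ (islin_consm a) k x. Qed.
Lemma consm0 (a : A) : consm a 0 = 0.
Proof. exact: islin0 (islin_consm a). Qed.
Lemma shuffleDl (x y z : T) : shuffle (x + y) z = shuffle x z + shuffle y z.
Proof. exact: islinD (islin_shl z) x y. Qed.
Lemma shuffleBl (x y z : T) : shuffle (x - y) z = shuffle x z - shuffle y z.
Proof. exact: islinB (islin_shl z) x y. Qed.
Lemma shuffleZl k (x z : T) : shuffle (k *: x) z = k *: shuffle x z.
Proof. exact: islinZ (islin_shl z) k x. Qed.
Lemma shuffleDr (x y z : T) : shuffle z (x + y) = shuffle z x + shuffle z y.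
Proof. exact: islinD (islin_shr z) x y. Qed.
Lemma shuffleBr (x y z : T) : shuffle z (x - y) = shuffle z x - shuffle z y.
Proof. exact: islinB (islin_shr z) x y. Qed.
Lemma shuffleZr k (x z : T) : shuffle z (k *: x) = k *: shuffle z x.
Proof. exact: islinZ (islin_shr z) k x. Qed.
End Words3.

Fact cm_key : unit. Proof. by []. Qed.
Definition cm (K : fieldType) (A : comAlgType K) := locked_with cm_key (@consm K A).
Fact sf_key : unit. Proof. by []. Qed.
Definition sf (K : fieldType) (A : comAlgType K) := locked_with sf_key (@shuffle K A).
Fact sL_key : unit. Proof. by []. Qed.
Definition sL (K : fieldType) (A : comAlgType K) := locked_with sL_key (@sh K A).
Arguments cm {K A}. Arguments sf {K A}. Arguments sL {K A}.

Section Locked.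
Variables (K : fieldType) (A : comAlgType K).
Local Notation T := (Tfree A).

Lemma csE : @cm K A = @consm K A. Proof. exact: locked_withE. Qed.
Lemma sfE : @sf K A = @shuffle K A. Proof. exact: locked_withE. Qed.
Lemma sLE : @sL K A = @sh K A. Proof. exact: locked_withE. Qed.

Lemma islin_cm (a : A) : islin (cm a). Proof. rewrite csE; exact: islin_consm. Qed.
Lemma islin_sfl (y : T) : islin (fun x => sf x y). Proof. rewrite sfE; exact: islin_shl. Qed.
Lemma islin_sfr (x : T) : islin (fun y => sf x y). Proof. rewrite sfE; exact: islin_shr. Qed.

Lemma csU (a : A) w : cm a << w >> = << a :: w >> :> T. Proof. by rewrite csE consmU. Qed.
Lemma csD (a : A) (x y : T) : cm a (x + y) = cm a x + cm a y. Proof. by rewrite csE consmD. Qed.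
Lemma csB (a : A) (x y : T) : cm a (x - y) = cm a x - cm a y. Proof. by rewrite csE consmB. Qed.
Lemma csN (a : A) (x : T) : cm a (- x) = - cm a x. Proof. by rewrite csE consmN. Qed.
Lemma csZ (a : A) k (x : T) : cm a (k *: x) = k *: cm a x. Proof. by rewrite csE consmZ. Qed.
Lemma cs0 (a : A) : cm a 0 = 0 :> T. Proof. by rewrite csE consm0. Qed.
Lemma sfDl (x y z : T) : sf (x + y) z = sf x z + sf y z. Proof. by rewrite sfE shuffleDl. Qed.
Lemma sfBl (x y z : T) : sf (x - y) z = sf x z - sf y z. Proof. by rewrite sfE shuffleBl. Qed.
Lemma sfZl k (x z : T) : sf (k *: x) z = k *: sf x z. Proof. by rewrite sfE shuffleZl. Qed.
Lemma sfDr (x y z : T) : sf z (x + y) = sf z x + sf z y. Proof. by rewrite sfE shuffleDr. Qed.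
Lemma sfBr (x y z : T) : sf z (x - y) = sf z x - sf z y. Proof. by rewrite sfE shuffleBr. Qed.
Lemma sfZr k (x z : T) : sf z (k *: x) = k *: sf z x. Proof. by rewrite sfE shuffleZr. Qed.
Lemma sfU (u v : seq A) : sf << u >> << v >> = sL u v. Proof. by rewrite sfE sLE shuffleU. Qed.
Lemma sL_nil_l (v : seq A) : sL [::] v = << v >>. Proof. by rewrite sLE. Qed.
Lemma sL_nil_r (u : seq A) : sL u [::] = << u >>. Proof. by rewrite sLE sh_nil_r. Qed.
Lemma sL_cons (a b : A) u v : sL (a :: u) (b :: v) =
  cm a (sL u (b::v)) + cm b (sL (a::u) v) - cm (a*b) (cm 1 (sL u v)).
Proof. by rewrite sLE csE sh_cons. Qed.
Lemma sL_comm (u v : seq A) : sL u v = sL v u. Proof. by rewrite sLE sh_comm. Qed.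
Lemma sfC (x y : T) : sf x y = sf y x. Proof. by rewrite sfE shuffleC. Qed.
Lemma sf_nil_r (x : T) : sf x << [::] >> = x. Proof. by rewrite sfE shuffle_nil_r. Qed.
Lemma sf_nil_l (x : T) : sf << [::] >> x = x. Proof. by rewrite sfE shuffle_nil_l. Qed.
Lemma sf_cons (a b : A) (S U : T) : sf (cm a S) (cm b U) =
  cm a (sf S (cm b U)) + cm b (sf (cm a S) U) - cm (a*b) (cm 1 (sf S U)).
Proof. by rewrite sfE csE shuffle_cons. Qed.
Lemma sL1l (u v : seq A) : sL (1 :: u) v = cm 1 (sL u v). Proof. by rewrite sLE csE sh1l. Qed.
Lemma sf1l (S U : T) : sf (cm 1 S) U = cm 1 (sf S U). Proof. by rewrite sfE csE shuffle1l. Qed.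
Lemma sL_one (u : seq A) : sL u [:: 1] = << 1 :: u >>. Proof. by rewrite sLE sh_one. Qed.
End Locked.

Ltac ext := lazymatch goal with |- forall x, @eq ?V _ _ => apply: (@ext_basis _ _ V) end.

Ltac linL :=
  repeat match goal with
  | |- islin (fun _ => _ + _) => apply: islin_add
  | |- islin (fun _ => _ - _) => apply: islin_sub
  | |- islin (fun _ => - _) => apply: islin_opp
  | |- islin (fun x => x) => apply: islin_id
  | |- islin (fun _ => 0) => apply: islin_const0
  | |- islin (fun x => cm ?a (@?G x)) =>
      apply: (islin_comp (F := cm a) (G := G) (islin_cm a))
  | |- islin (fun x => sf (@?G x) ?y) =>
      apply: (islin_comp (F := fun z => sf z y) (G := G) (islin_sfl y))
  | |- islin (fun x => sf ?y (@?G x)) =>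
      apply: (islin_comp (F := fun z => sf y z) (G := G) (islin_sfr y))
  | |- islin _ => first [exact: islin_cm | exact: islin_sfl | exact: islin_sfr
                        | exact: islin_lin_ext | exact: islin_id ]
  end.

Lemma perm9 (V : zmodType) (a1 a2 a3 b1 b2 b3 c1 c2 c3 : V) :
 a1 + a2 - a3 + (b1 + b2 - b3) - (c1 + c2 - c3) = a1 + b1 + (a2 + b2 - c2) - a3 - b3 - c1 + c3.
Proof.
rewrite !opprD !opprK !addrA.
by rewrite [LHS](ACl (1*4*2*5*8*3*6*7*9)).
Qed.

Lemma perm7 (V : zmodType) (a1 b1 c1 d e f g : V) :
  a1 + b1 + c1 - d - e - f + g = b1 + c1 + a1 - f - d - e + g.
Proof. by rewrite [LHS](ACl (2*3*1*6*4*5*7)). Qed.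

Section Assoc.
Variables (K : fieldType) (A : comAlgType K).
Local Notation T := (Tfree A).

Definition t3 (u v w : seq A) : T := sf (sL u v) << w >>.

Lemma t3_expand a b c x y z : t3 (a::x) (b::y) (c::z) =
  cm a (t3 x (b::y) (c::z)) + cm b (t3 (a::x) y (c::z)) + cm c (t3 (a::x) (b::y) z)
  - cm (a*c) (cm 1 (t3 x (b::y) z)) - cm (b*c) (cm 1 (t3 (a::x) y z))
  - cm (a*b) (cm 1 (t3 x y (c::z))) + cm (a*b*c) (cm 1 (cm 1 (t3 x y z))).
Proof.
rewrite /t3 sL_cons -[<< c :: z >>]csU.
rewrite !(sfBl, sfDl, csB, csD).
rewrite (sf_cons a c) (sf_cons b c) (sf_cons (a*b) c) !sf1l.
exact: perm9.
Qed.

Lemma t3_nil_l Y Z : t3 [::] Y Z = sL Y Z.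
Proof. by rewrite /t3 sL_nil_l sfU. Qed.
Lemma t3_nil_r X Y : t3 X Y [::] = sL X Y.
Proof. by rewrite /t3 sf_nil_r. Qed.
Lemma t3_nil_m X Z : t3 X [::] Z = sL X Z.
Proof. by rewrite /t3 sL_nil_r sfU. Qed.

Lemma t3_cyc n : forall X Y Z, (size X + size Y + size Z <= n)%N ->
  t3 X Y Z = t3 Y Z X.
Proof.
elim: n => [|n IH] [|a x] [|b y] [|c z] //= Hs;
  rewrite ?t3_nil_l ?t3_nil_r ?t3_nil_m ?(sL_comm [::]) //; try lia.
all: try by rewrite sL_comm.
rewrite !t3_expand.
rewrite (IH x (b::y) (c::z)) /=; last lia.
rewrite (IH (a::x) y (c::z)) /=; last lia.
rewrite (IH (a::x) (b::y) z) /=; last lia.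
rewrite (IH x (b::y) z) /=; last lia.
rewrite (IH (a::x) y z) /=; last lia.
rewrite (IH x y (c::z)) /=; last lia.
rewrite (IH x y z) /=; last lia.
rewrite (mulrC a c) (mulrC a b) (mulrAC b a c).
exact: perm7.
Qed.

Lemma sL_assoc (u v w : seq A) : sf (sL u v) << w >> = sf << u >> (sL v w).
Proof.
rewrite [RHS]sfC.
by have := @t3_cyc (size u + size v + size w) u v w; rewrite /t3 => ->.
Qed.

Lemma sfA (x y z : T) : sf (sf x y) z = sf x (sf y z).
Proof.
move: x; ext; linL => u.
move: y; ext; linL => v.
move: z; ext; linL => w.
by rewrite !sfU sL_assoc.
Qed.
End Assoc.

Lemma dif9 (V : zmodType) (a1 b1 c1 a2 b2 c2 a3 b3 c3 : V) :
  (a1 + b1 - c1) - (a2 + b2 - c2) - (a3 + b3 - c3) =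
  (a1 - a2 - a3) + (b1 - b2 - b3) - (c1 - c2 - c3).
Proof.
rewrite !opprD !opprK !addrA.
by rewrite [LHS](ACl (1*4*7*2*5*8*3*6*9)).
Qed.

Lemma difZ (K : fieldType) (V : lmodType K) (k : K) (a1 b1 c1 a2 b2 c2 : V) :
  (a1 + b1 - c1) - k *: (a2 + b2 - c2) =
  (a1 - k *: a2) + (b1 - k *: b2) - (c1 - k *: c2).
Proof.
rewrite !scalerDr scalerN !opprD !opprK !addrA.
by rewrite [LHS](ACl (1*4*2*5*3*6)).
Qed.

Section NQuot.
Variables (K : fieldType) (A : comAlgType K).
Local Notation T := (Tfree A).
Local Notation in_N := (@in_N K A).

Lemma in_N_opp (x : T) : in_N x -> in_N (- x).
Proof. by move=> h; rewrite -scaleN1r; apply: N_scal. Qed.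
Lemma in_N_sub (x y : T) : in_N x -> in_N y -> in_N (x - y).
Proof. by move=> hx hy; apply: N_plus => //; apply: in_N_opp. Qed.

Lemma in_N_bigsum (r : seq (seq A)) (c : seq A -> K) (G : seq A -> T) :
  (forall w, in_N (G w)) -> in_N (\sum_(w <- r) c w *: G w).
Proof.
move=> hw; elim: r => [|w r IH]; first by rewrite big_nil; exact: N_zero.
by rewrite big_cons; apply: N_plus => //; apply: N_scal.
Qed.

Lemma in_N_basis (F : {malg K[seq A]} -> T) : islin F ->
  (forall w, in_N (F << w >>)) -> forall S, in_N (F S).
Proof.
move=> hF hw S; rewrite (lin_ext_uniq hF) /lin_ext.
exact: in_N_bigsum.
Qed.

Lemma in_N_map (F : T -> T) : islin F ->
  (forall w1 w2 x y, in_N (F (<< w1 ++ (x + y) :: w2 >> - << w1 ++ x :: w2 >>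
                              - << w1 ++ y :: w2 >>))) ->
  (forall w1 w2 k x, in_N (F (<< w1 ++ (k *: x) :: w2 >> - k *: << w1 ++ x :: w2 >>))) ->
  forall X, in_N X -> in_N (F X).
Proof.
move=> hF h1 h2 X; elim => //.
- by rewrite islin0 //; exact: N_zero.
- by move=> x y _ hx _ hy; rewrite islinD //; apply: N_plus.
- by move=> k x _ hx; rewrite islinZ //; apply: N_scal.
Qed.

Lemma cm_letterD (x y : A) (S : T) : in_N (cm (x + y) S - cm x S - cm y S).
Proof.
move: S; apply: in_N_basis; first by linL.
by move=> w; rewrite !csU; exact: (N_add [::] w x y).
Qed.

Lemma cm_letterZ k (x : A) (S : T) : in_N (cm (k *: x) S - k *: cm x S).
Proof.
move: S; apply: in_N_basis.
  apply: islin_sub; first by linL.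
  by move=> k' u v; rewrite islin_cm scalerDr !scalerA mulrC.
by move=> w; rewrite !csU; exact: (N_scale [::] w k x).
Qed.

Lemma in_N_cm (c : A) (X : T) : in_N X -> in_N (cm c X).
Proof.
apply: in_N_map; first exact: islin_cm.
  by move=> w1 w2 x y; rewrite !csB !csU; exact: (N_add (c :: w1) w2 x y).
by move=> w1 w2 k x; rewrite !csB csZ !csU; exact: (N_scale (c :: w1) w2 k x).
Qed.

Lemma sL_addN w1 w2 (x y : A) v :
  in_N (sL (w1 ++ (x + y) :: w2) v - sL (w1 ++ x :: w2) v - sL (w1 ++ y :: w2) v).
Proof.
elim: w1 v => [|a w1 IH] v.
  elim: v => [|b v IHv]; first by rewrite !sL_nil_r; exact: (N_add [::] w2 x y).
  rewrite /= !sL_cons dif9; apply: in_N_sub; first apply: N_plus.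
  - exact: cm_letterD.
  - by rewrite -!csB; apply: in_N_cm.
  - by rewrite mulrDl; exact: cm_letterD.
elim: v => [|b v IHv]; first by rewrite !sL_nil_r; exact: (N_add (a :: w1) w2 x y).
rewrite /= !sL_cons dif9; apply: in_N_sub; first apply: N_plus.
- by rewrite -!csB; apply: in_N_cm; exact: IH.
- by rewrite -!csB; apply: in_N_cm.
- by rewrite -!csB; apply: in_N_cm; apply: in_N_cm; exact: IH.
Qed.

Lemma sL_scaleN w1 w2 k (x : A) v :
  in_N (sL (w1 ++ (k *: x) :: w2) v - k *: sL (w1 ++ x :: w2) v).
Proof.
elim: w1 v => [|a w1 IH] v.
  elim: v => [|b v IHv]; first by rewrite !sL_nil_r; exact: (N_scale [::] w2 k x).
  rewrite /= !sL_cons difZ; apply: in_N_sub; first apply: N_plus.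
  - exact: cm_letterZ.
  - by rewrite -csZ -csB; apply: in_N_cm.
  - by rewrite -scalerAl; exact: cm_letterZ.
elim: v => [|b v IHv]; first by rewrite !sL_nil_r; exact: (N_scale (a :: w1) w2 k x).
rewrite /= !sL_cons difZ; apply: in_N_sub; first apply: N_plus.
- by rewrite -csZ -csB; apply: in_N_cm; exact: IH.
- by rewrite -csZ -csB; apply: in_N_cm.
- by rewrite -!csZ -!csB; apply: in_N_cm; apply: in_N_cm; exact: IH.
Qed.

Lemma sf_N (X Y : T) : in_N X -> in_N (sf X Y).
Proof.
move=> hX; move: Y; apply: in_N_basis; first by linL.
move=> v; move: X hX; apply: in_N_map; first by linL.
  by move=> w1 w2 x y; rewrite !sfBl !sfU; exact: sL_addN.
by move=> w1 w2 k x; rewrite sfBl sfZl !sfU; exact: sL_scaleN.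
Qed.
End NQuot.

Fact tp_key : unit. Proof. by []. Qed.
Definition tp (K : fieldType) (A : comAlgType K) := locked_with tp_key (@tplus_of K A).
Fact tm_key : unit. Proof. by []. Qed.
Definition tm (K : fieldType) (A : comAlgType K) := locked_with tm_key (@tmul K A).
Fact pa_key : unit. Proof. by []. Qed.
Definition pa (K : fieldType) (A : comAlgType K) := locked_with pa_key (@PA K A).
Fact em_key : unit. Proof. by []. Qed.
Definition em (K : fieldType) (A : comAlgType K) := locked_with em_key (@emb K A).
Arguments tp {K A}. Arguments tm {K A}. Arguments pa {K A}. Arguments em {K A}.

Section TP.
Variables (K : fieldType) (A : comAlgType K).
Local Notation T := (Tfree A).
Local Notation TP := (Tplus A).

Lemma tpE : @tp K A = @tplus_of K A. Proof. exact: locked_withE. Qed.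
Lemma tmE : @tm K A = @tmul K A. Proof. exact: locked_withE. Qed.
Lemma paE : @pa K A = @PA K A. Proof. exact: locked_withE. Qed.
Lemma emE : @em K A = @emb K A. Proof. exact: locked_withE. Qed.

Lemma islin_tp (c : A) : islin (tp c). Proof. rewrite tpE; exact: islin_lin_ext. Qed.
Lemma islin_tml (y : TP) : islin (fun x => tm x y). Proof. rewrite tmE; exact: islin_bilin_l. Qed.
Lemma islin_tmr (x : TP) : islin (fun y => tm x y). Proof. rewrite tmE; exact: islin_bilin_r. Qed.
Lemma islin_pa : islin (@pa K A). Proof. rewrite paE; exact: islin_lin_ext. Qed.
Lemma islin_em : islin (@em K A). Proof. rewrite emE; exact: islin_lin_ext. Qed.

Lemma tpU (c : A) w : tp c << w >> = << (c, w) >> :> TP.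
Proof. by rewrite tpE /tplus_of lin_extU. Qed.
Lemma tmU (p q : A * seq A) : tm << p >> << q >> = tp (p.1 * q.1) (sL p.2 q.2).
Proof. by rewrite tmE tpE sLE /tmul bilin_extU. Qed.
Lemma paU (p : A * seq A) : pa << p >> = << (1, p.1 :: p.2) >> :> TP.
Proof. by rewrite paE /PA lin_extU. Qed.
Lemma emU (p : A * seq A) : em << p >> = << p.1 :: p.2 >> :> T.
Proof. by rewrite emE /emb lin_extU. Qed.
End TP.
Arguments islin_pa {K A}. Arguments islin_em {K A}.


Ltac linT :=
  repeat match goal with
  | |- islin (fun _ => _ + _) => apply: islin_add
  | |- islin (fun _ => _ - _) => apply: islin_sub
  | |- islin (fun _ => - _) => apply: islin_opp
  | |- islin (fun x => x) => apply: islin_id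
  | |- islin (fun _ => 0) => apply: islin_const0
  | |- islin (fun x => cm ?a (@?G x)) =>
      apply: (islin_comp (F := cm a) (G := G) (islin_cm a))
  | |- islin (fun x => sf (@?G x) ?y) =>
      apply: (islin_comp (F := fun z => sf z y) (G := G) (islin_sfl y))
  | |- islin (fun x => sf ?y (@?G x)) =>
      apply: (islin_comp (F := fun z => sf y z) (G := G) (islin_sfr y))
  | |- islin (fun x => tp ?a (@?G x)) =>
      apply: (islin_comp (F := tp a) (G := G) (islin_tp a))
  | |- islin (fun x => pa (@?G x)) =>
      apply: (islin_comp (F := pa) (G := G) islin_pa)
  | |- islin (fun x => em (@?G x)) =>
      apply: (islin_comp (F := em) (G := G) islin_em)
  | |- islin (fun x => tm (@?G x) ?y) =>
      apply: (islin_comp (F := fun z => tm z y) (G := G) (islin_tml y))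
  | |- islin (fun x => tm ?y (@?G x)) =>
      apply: (islin_comp (F := fun z => tm y z) (G := G) (islin_tmr y))
  | |- islin _ => first [exact: islin_cm | exact: islin_sfl | exact: islin_sfr
                        | exact: islin_tp | exact: islin_pa | exact: islin_em
                        | exact: islin_tml | exact: islin_tmr
                        | exact: islin_lin_ext | exact: islin_id ]
  end.

Section TP2.
Variables (K : fieldType) (A : comAlgType K).
Local Notation T := (Tfree A).
Local Notation TP := (Tplus A).

Lemma tmDl (x y z : TP) : tm (x + y) z = tm x z + tm y z. Proof. exact: islinD (islin_tml z) x y. Qed.
Lemma tmBl (x y z : TP) : tm (x - y) z = tm x z - tm y z. Proof. exact: islinB (islin_tml z) x y. Qed.
Lemma tmDr (x y z : TP) : tm z (x + y) = tm z x + tm z y. Proof. exact: islinD (islin_tmr z) x y. Qed.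
Lemma tmBr (x y z : TP) : tm z (x - y) = tm z x - tm z y. Proof. exact: islinB (islin_tmr z) x y. Qed.
Lemma paD (x y : TP) : pa (x + y) = pa x + pa y. Proof. exact: islinD islin_pa x y. Qed.
Lemma paB (x y : TP) : pa (x - y) = pa x - pa y. Proof. exact: islinB islin_pa x y. Qed.
Lemma emD (x y : TP) : em (x + y) = em x + em y. Proof. exact: islinD islin_em x y. Qed.
Lemma emB (x y : TP) : em (x - y) = em x - em y. Proof. exact: islinB islin_em x y. Qed.
Lemma emZ k (x : TP) : em (k *: x) = k *: em x. Proof. exact: islinZ islin_em k x. Qed.
Lemma tpD (c : A) (x y : T) : tp c (x + y) = tp c x + tp c y. Proof. exact: islinD (islin_tp c) x y. Qed.
Lemma tpB (c : A) (x y : T) : tp c (x - y) = tp c x - tp c y. Proof. exact: islinB (islin_tp c) x y. Qed.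

Lemma tm_tp_r (a c : A) u (S : T) : tm << (a, u) >> (tp c S) = tp (a * c) (sf << u >> S).
Proof. by move: S; ext; linT => w; rewrite tpU tmU sfU. Qed.
Lemma tm_tp_l (b c : A) v (S : T) : tm (tp c S) << (b, v) >> = tp (c * b) (sf S << v >>).
Proof. by move: S; ext; linT => w; rewrite tpU tmU sfU. Qed.
Lemma pa_tp (c : A) (S : T) : pa (tp c S) = tp 1 (cm c S).
Proof. by move: S; ext; linT => w; rewrite tpU paU csU tpU. Qed.
Lemma em_tp (c : A) (S : T) : em (tp c S) = cm c S.
Proof. by move: S; ext; linT => w; rewrite tpU emU csU. Qed.

Lemma tmA (x y z : TP) : tm x (tm y z) = tm (tm x y) z.
Proof.
move: x; ext; linT => [[a u]].
move: y; ext; linT => [[b v]].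
move: z; ext; linT => [[c w]].
by rewrite !tmU /= tm_tp_r tm_tp_l sL_assoc mulrA.
Qed.

Lemma tmC (x y : TP) : tm x y = tm y x.
Proof.
move: x; ext; linT => [[a u]].
move: y; ext; linT => [[b v]].
by rewrite !tmU /= mulrC sL_comm.
Qed.

Lemma tm1 (x : TP) : tm (tone A) x = x.
Proof.
move: x; ext; linT => [[b v]].
by rewrite /tone tmU /= mul1r sL_nil_l tpU.
Qed.

Lemma TD_tp (x y : TP) :
  tm (pa x) (pa y) = pa (tm (pa x) y + tm x (pa y)) - pa (tm (tm x (pa (tone A))) y).
Proof.
move: x; ext; linT => [[a u]].
move: y; ext; linT => [[b v]].
rewrite !paU /tone !tmU /= sL_one tpU paD !pa_tp tmU /= sL1l pa_tp.
by rewrite !mul1r !mulr1 -!tpD -tpB sL_cons (addrC (cm b _)).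
Qed.
End TP2.

Definition Mw (K : fieldType) (A : comAlgType K) (u v : seq A) : Tfree A :=
  match u, v with
  | a :: u', b :: v' => cm (a * b) (sL u' v')
  | _, _ => 0
  end.
Fact Mm_key : unit. Proof. by []. Qed.
Definition Mm (K : fieldType) (A : comAlgType K) :=
  locked_with Mm_key (bilin_ext (@Mw K A)).
Arguments Mm {K A}.

Section Quot.
Variables (K : fieldType) (A : comAlgType K).
Local Notation T := (Tfree A).
Local Notation TP := (Tplus A).

Lemma MmE : @Mm K A = bilin_ext (@Mw K A). Proof. exact: locked_withE. Qed.
Lemma islin_Mml (y : T) : islin (fun x => Mm x y). Proof. rewrite MmE; exact: islin_bilin_l. Qed.
Lemma islin_Mmr (x : T) : islin (fun y => Mm x y). Proof. rewrite MmE; exact: islin_bilin_r. Qed.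
Lemma MmU (u v : seq A) : Mm << u >> << v >> = Mw u v. Proof. by rewrite MmE bilin_extU. Qed.

Lemma Mw_comm (u v : seq A) : Mw u v = Mw v u.
Proof. by case: u => [|a u]; case: v => [|b v] //=; rewrite mulrC sL_comm. Qed.

Lemma MmC (x y : T) : Mm x y = Mm y x.
Proof.
move: x; apply: (@ext_basis _ _ T); first exact: islin_Mml.
  exact: islin_Mmr.
move=> u; move: y; apply: (@ext_basis _ _ T); first exact: islin_Mmr.
  exact: islin_Mml.
by move=> v; rewrite !MmU Mw_comm.
Qed.

Lemma em_tm (x y : TP) : em (tm x y) = Mm (em x) (em y).
Proof.
move: x; apply: (@ext_basis _ _ T).
- by linT.
- exact: (islin_comp (F := fun z => Mm z (em y)) (G := em) (islin_Mml _) islin_em).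
move=> [a u]; move: y; apply: (@ext_basis _ _ T).
- by linT.
- exact: (islin_comp (F := fun z => Mm (em << (a, u) >>) z) (G := em) (islin_Mmr _) islin_em).
by move=> [b v]; rewrite tmU !emU MmU /= em_tp.
Qed.

Lemma Mm_N (X Y : T) : in_N X -> in_N (Mm X Y).
Proof.
move=> hX; move: Y; apply: in_N_basis; first exact: islin_Mmr.
move=> v; move: X hX; apply: in_N_map; first exact: islin_Mml.
  move=> w1 w2 x y; rewrite !(islinB (islin_Mml _)) !MmU.
  case: v => [|b v]; first by case: w1 => [|a w1] /=; rewrite !subrr; exact: N_zero.
  case: w1 => [|a w1] /=.
    by rewrite mulrDl; exact: cm_letterD.
  by rewrite -!csB; apply: in_N_cm; exact: sL_addN.
move=> w1 w2 k x; rewrite !(islinB (islin_Mml _)) (islinZ (islin_Mml _)) !MmU.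
case: v => [|b v]; first by case: w1 => [|a w1] /=; rewrite scaler0 subrr; exact: N_zero.
case: w1 => [|a w1] /=.
  by rewrite -scalerAl; exact: cm_letterZ.
by rewrite -csZ -csB; apply: in_N_cm; exact: sL_scaleN.
Qed.

Lemma tequivE (x y : TP) : tequiv x y <-> in_N (em (x - y)).
Proof. by rewrite emE. Qed.

Lemma tequiv_eq (x y : TP) : x = y -> tequiv x y.
Proof. by move=> ->; apply/tequivE; rewrite subrr islin0; [exact: N_zero | exact: islin_em]. Qed.

Lemma tm_wd (x x' y y' : TP) : tequiv x x' -> tequiv y y' -> tequiv (tm x y) (tm x' y').
Proof.
move=> /tequivE hx /tequivE hy; apply/tequivE.
have -> : tm x y - tm x' y' = tm (x - x') y + tm x' (y - y').
  by rewrite tmBl tmBr addrA subrK.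
rewrite emD !em_tm; apply: N_plus; first exact: Mm_N.
by rewrite MmC; exact: Mm_N.
Qed.

Lemma em_pa (x : TP) : em (pa x) = cm 1 (em x).
Proof. by move: x; ext; linT => [[a u]]; rewrite paU !emU csU. Qed.

Lemma pa_wd (x x' : TP) : tequiv x x' -> tequiv (pa x) (pa x').
Proof.
move=> /tequivE h; apply/tequivE.
by rewrite -paB em_pa; apply: in_N_cm.
Qed.
End Quot.

Section Univ.
Variables (K : fieldType) (A B : comAlgType K) (P : {linear B -> B}).
Hypothesis hTD : TD_identity P.
Variable phi : {lrmorphism A -> B}.
Local Notation T := (Tfree A).
Local Notation TP := (Tplus A).

Fixpoint Hw (w : seq A) : B := if w is b :: w' then P (phi b * Hw w') else 1.
Definition fw (p : A * seq A) : B := phi p.1 * Hw p.2.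
Definition ff : TP -> B := lin_ext fw.
Definition Hlin : T -> B := lin_ext Hw.

Lemma islin_mull (c : B) : islin (fun x : B => c * x).
Proof. by move=> k x y; rewrite mulrDr scalerAr. Qed.
Lemma islin_mulr (c : B) : islin (fun x : B => x * c).
Proof. by move=> k x y; rewrite mulrDl scalerAl. Qed.
Lemma islin_P : islin P. Proof. exact: islin_linear. Qed.
Lemma islin_ff : islin ff. Proof. exact: islin_lin_ext. Qed.
Lemma islin_Hlin : islin Hlin. Proof. exact: islin_lin_ext. Qed.

Lemma PD x y : P (x + y) = P x + P y. Proof. exact: linearD. Qed.
Lemma PB x y : P (x - y) = P x - P y. Proof. exact: linearB. Qed.

Lemma Hlin_cm (c : A) (S : T) : Hlin (cm c S) = P (phi c * Hlin S).
Proof.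
move: S; apply: (@ext_basis _ _ B).
- exact: (islin_comp (F := Hlin) (G := cm c) islin_Hlin (islin_cm c)).
- exact: (islin_comp (F := P) (G := fun S => phi c * Hlin S) islin_P
          (islin_comp (F := fun x => phi c * x) (G := Hlin) (islin_mull _) islin_Hlin)).
by move=> w; rewrite csU /Hlin !lin_extU.
Qed.

Lemma P_Hw w : P (Hw w) = Hw w * P 1.
Proof.
case: w => [|b w] /=; first by rewrite mul1r.
set s := phi b * Hw w.
by rewrite hTD !mulr1 PD addrK.
Qed.

Lemma P_Hlin (S : T) : P (Hlin S) = Hlin S * P 1.
Proof.
move: S; apply: (@ext_basis _ _ B).
- exact: (islin_comp (F := P) (G := Hlin) islin_P islin_Hlin).
- exact: (islin_comp (F := fun x => x * P 1) (G := Hlin) (islin_mulr _) islin_Hlin).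
by move=> w; rewrite /Hlin lin_extU P_Hw.
Qed.

Lemma Hlin_sL (u v : seq A) : Hlin (sL u v) = Hw u * Hw v.
Proof.
elim: u v => [|a u IHu] v; first by rewrite sL_nil_l /Hlin lin_extU mul1r.
elim: v => [|b v IHv]; first by rewrite sL_nil_r /Hlin lin_extU mulr1.
rewrite sL_cons (islinB islin_Hlin) (islinD islin_Hlin) !Hlin_cm IHu IHv.
rewrite rmorph1 mul1r P_Hlin IHu.
rewrite [Hw (a :: u)]/= [Hw (b :: v)]/= hTD PD [X in _ = X - _]addrC.
rewrite rmorphM.
congr (P _ + P _ - P _); ring.
Qed.

Lemma ff_tp (c : A) (S : T) : ff (tp c S) = phi c * Hlin S.
Proof.
move: S; apply: (@ext_basis _ _ B).
- exact: (islin_comp (F := ff) (G := tp c) islin_ff (islin_tp c)).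
- exact: (islin_comp (F := fun x => phi c * x) (G := Hlin) (islin_mull _) islin_Hlin).
by move=> w; rewrite tpU /ff /Hlin !lin_extU.
Qed.

Lemma ff_tm (x y : TP) : ff (tm x y) = ff x * ff y.
Proof.
move: x; apply: (@ext_basis _ _ B).
- exact: (islin_comp (F := ff) (G := fun x => tm x y) islin_ff (islin_tml y)).
- exact: (islin_comp (F := fun z => z * ff y) (G := ff) (islin_mulr _) islin_ff).
move=> [a u]; move: y; apply: (@ext_basis _ _ B).
- exact: (islin_comp (F := ff) (G := fun y => tm _ y) islin_ff (islin_tmr _)).
- exact: (islin_comp (F := fun z => ff << (a, u) >> * z) (G := ff) (islin_mull _) islin_ff).
move=> [b v]; rewrite tmU ff_tp Hlin_sL /ff !lin_extU /fw /= rmorphM.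
ring.
Qed.

Lemma ff_tone : ff (tone A) = 1.
Proof. by rewrite /ff /tone lin_extU /fw /= rmorph1 mulr1. Qed.

Lemma ff_pa (x : TP) : ff (pa x) = P (ff x).
Proof.
move: x; apply: (@ext_basis _ _ B).
- exact: (islin_comp (F := ff) (G := pa) islin_ff islin_pa).
- exact: (islin_comp (F := P) (G := ff) islin_P islin_ff).
by move=> [a u]; rewrite paU /ff !lin_extU /fw /= rmorph1 mul1r.
Qed.

Lemma ff_iA (a : A) : ff (iA a) = phi a.
Proof. by rewrite /ff /iA lin_extU /fw /= mulr1. Qed.

Lemma ff_rec (a b : A) w : ff << (a, b :: w) >> = phi a * P (ff << (b, w) >>).
Proof. by rewrite /ff !lin_extU /fw. Qed.

Definition gw (w : seq A) : B := if w is a :: w' then phi a * Hw w' else 0.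
Definition FF : T -> B := lin_ext gw.

Lemma Hw_add w1 w2 (x y : A) :
  Hw (w1 ++ (x + y) :: w2) = Hw (w1 ++ x :: w2) + Hw (w1 ++ y :: w2).
Proof.
elim: w1 => [|a w1 IH] /=; first by rewrite rmorphD mulrDl PD.
by rewrite IH mulrDr PD.
Qed.

Lemma Hw_scale w1 w2 k (x : A) :
  Hw (w1 ++ (k *: x) :: w2) = k *: Hw (w1 ++ x :: w2).
Proof.
elim: w1 => [|a w1 IH] /=; first by rewrite linearZ /= -scalerAl linearZ.
by rewrite IH -scalerAr linearZ.
Qed.

Lemma gw_add w1 w2 (x y : A) :
  gw (w1 ++ (x + y) :: w2) = gw (w1 ++ x :: w2) + gw (w1 ++ y :: w2).
Proof.
case: w1 => [|a w1] /=; first by rewrite rmorphD mulrDl.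
by rewrite Hw_add mulrDr.
Qed.

Lemma gw_scale w1 w2 k (x : A) :
  gw (w1 ++ (k *: x) :: w2) = k *: gw (w1 ++ x :: w2).
Proof.
case: w1 => [|a w1] /=; first by rewrite linearZ /= scalerAl.
by rewrite Hw_scale scalerAr.
Qed.

Lemma FF_N (X : T) : in_N X -> FF X = 0.
Proof.
have hF : islin FF by exact: islin_lin_ext.
elim => //.
- move=> w1 w2 x y; rewrite !(islinB hF) /FF !lin_extU gw_add.
  by rewrite [gw _ + gw _]addrC addrK subrr.
- move=> w1 w2 k x; rewrite (islinB hF) (islinZ hF) /FF !lin_extU gw_scale.
  by rewrite subrr.
- exact: islin0.
- by move=> x y _ hx _ hy; rewrite (islinD hF) hx hy addr0.
- by move=> k x _ hx; rewrite (islinZ hF) hx scaler0.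
Qed.

Lemma ff_em (x : TP) : ff x = FF (em x).
Proof.
move: x; apply: (@ext_basis _ _ B).
- exact: islin_ff.
- exact: (islin_comp (F := FF) (G := em) (islin_lin_ext _) islin_em).
by move=> [a u]; rewrite emU /ff /FF !lin_extU.
Qed.

Lemma ff_wd (x y : TP) : tequiv x y -> ff x = ff y.
Proof.
move=> /tequivE h; apply/eqP; rewrite -subr_eq0 -(islinB islin_ff).
by rewrite ff_em FF_N.
Qed.

Lemma ff_unique (g : TP -> B) : islin g ->
  (forall x y, g (tm x y) = g x * g y) -> (forall x, g (pa x) = P (g x)) ->
  (forall a, g (iA a) = phi a) -> forall x, g x = ff x.
Proof.
move=> hg gM gP gi; apply: (@ext_basis _ _ B) => //; first exact: islin_ff.
move=> [a w]; elim: w a => [|b w IH] a; first by rewrite gi ff_iA.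
have -> : << (a, b :: w) >> = tm (iA a) (pa << (b, w) >>) :> TP.
  by rewrite paU /iA tmU /= mulr1 sL_nil_l tpU.
by rewrite gM gP gi IH ff_tm ff_pa ff_iA.
Qed.
End Univ.

Theorem theorem4p8 (K : fieldType) (charK0 : [pchar K] =i pred0)
  (A : comAlgType K) :
  (* (T^+(A), bar., P_A) is a well-defined unital commutative TD-algebra *)
  [/\ forall x x' y y' : Tplus A, tequiv x x' -> tequiv y y' ->
        tequiv (tmul x y) (tmul x' y'),
      forall x x' : Tplus A, tequiv x x' -> tequiv (PA x) (PA x'),
      forall x y z : Tplus A, tequiv (tmul x (tmul y z)) (tmul (tmul x y) z),
      forall x y : Tplus A, tequiv (tmul x y) (tmul y x)
    & forall x : Tplus A, tequiv (tmul (tone A) x) x] /\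
  (forall x y : Tplus A,
        tequiv (tmul (PA x) (PA y))
               (PA (tmul (PA x) y + tmul x (PA y))
                - PA (tmul (tmul x (PA (tone A))) y))) /\
  (* i_A is a unital algebra morphism *)
  [/\ forall a b : A, tequiv (iA (a + b)) (iA a + iA b),
      forall (k : K) (a : A), tequiv (iA (k *: a)) (k *: iA a),
      forall a b : A, tequiv (iA (a * b)) (tmul (iA a) (iA b))
    & iA 1 = tone A] /\
  (* universal property *)
  (forall (B : comAlgType K) (P : {linear B -> B}),
     TD_identity P ->
     forall phi : {lrmorphism A -> B},
     exists f : Tplus A -> B,
       [/\ TD_morphism P f,
           forall a : A, f (iA a) = phi a,
           forall (a b : A) (w : seq A),
             f << (a, b :: w) >> = phi a * P (f << (b, w) >>)
         & forall g : Tplus A -> B, TD_morphism P g ->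
             (forall a : A, g (iA a) = phi a) -> forall x, g x = f x]).
Proof.
split; [|split; [|split]].
- split.
  + by move=> x x' y y' hx hy; rewrite -tmE; exact: tm_wd.
  + by move=> x x' h; rewrite -paE; exact: pa_wd.
  + by move=> x y z; rewrite -tmE; apply: tequiv_eq; exact: tmA.
  + by move=> x y; rewrite -tmE; apply: tequiv_eq; exact: tmC.
  + by move=> x; rewrite -tmE; apply: tequiv_eq; exact: tm1.
- by move=> x y; rewrite -tmE -paE; apply: tequiv_eq; exact: TD_tp.
- split => //.
  + move=> a b; apply/tequivE; rewrite emB emD !emU /= opprD addrA.
    exact: (N_add [::] [::] a b).
  + move=> k a; apply/tequivE; rewrite emB emZ !emU /=.
    exact: (N_scale [::] [::] k a).
  + move=> a b; apply: tequiv_eq; rewrite -tmE /iA tmU /= sL_nil_l tpU.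
    by [].
- move=> B P hTD phi; exists (ff P phi); split.
  + split.
    * by move=> x y; exact: ff_wd.
    * exact: islin_ff.
    * by move=> x y; rewrite -tmE; exact: ff_tm.
    * exact: ff_tone.
    * by move=> x; rewrite -paE; exact: ff_pa.
  + exact: ff_iA.
  + exact: ff_rec.
  + move=> g [gwd glin gM g1 gP] gi x; apply: ff_unique => //.
    * by move=> x' y'; rewrite tmE.
    * by move=> x'; rewrite paE.
Qed.
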